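(* For all real numbers $a,b,c>0$, \[ \frac{54abc + (a+b+c)^{3}}{\left(\sqrt{a^{2}+2bc} + \sqrt{2ab+c^{2}} + \sqrt{2ac+b^{2}}\right)^{2}} \leq a+b+c. \] *)

(* Defs.v *)
From Stdlib Require Import Reals.

(* Main.v *)
Require Import Defs.
From Stdlib Require Import Reals Lra Psatz.
Open Scope R_scope.

Lemma cube_ge (t g : R) : 0 < g -> 0 <= t -> 27 * g ^ 3 <= t ^ 3 -> 3 * g <= t.
Proof. intros Hg Ht H. destruct (Rle_lt_dec (3*g) t) as [h|h]; auto.
  exfalso. assert (t^3 < (3*g)^3).
  { assert (0 <= t*t) by nra. assert (t*t < (3*g)*(3*g)) by nra. nra. }
  nra. Qed.

Lemma amgm (u v g : R) : 0 < g -> 0 <= u -> 0 <= v -> u * v * v = g ^ 3 -> 3 * g <= u + 2 * v.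
Proof. intros. apply cube_ge; auto. lra.
  assert ((u+2*v)^3 - 27*(u*v*v) = (u-v)^2*(u+8*v)) by ring.
  assert (0 <= (u-v)^2*(u+8*v)) by (apply Rmult_le_pos; [apply pow2_ge_0|lra]). nra. Qed.

Lemma prod_ge (x y g : R) : 0 <= x -> 0 <= y -> 0 < g -> 3*g <= x^2 -> 3*g <= y^2 -> 3*g <= x*y.
Proof. intros. assert (0 <= x*y) by nra.
  assert ((3*g)*(3*g) <= (x*y)*(x*y)) by (replace ((x*y)*(x*y)) with (x^2*y^2) by ring; nra).
  nra. Qed.

Theorem mainTheorem8 (a b c : R) (ha : 0 < a) (hb : 0 < b) (hc : 0 < c) :
  (54 * a * b * c + (a + b + c) ^ 3) /
    (sqrt (a ^ 2 + 2 * b * c) + sqrt (2 * a * b + c ^ 2) + sqrt (2 * a * c + b ^ 2)) ^ 2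
  <= a + b + c.
Proof.
  set (g := Rpower (a*b*c) (1/3)).
  assert (Hg : 0 < g) by (unfold g, Rpower; apply exp_pos).
  assert (Hg3 : g ^ 3 = a*b*c).
  { unfold g. rewrite <- Rpower_pow by (apply exp_pos).
    rewrite Rpower_mult. replace (1/3 * INR 3) with 1 by (simpl; field).
    apply Rpower_1. apply Rmult_lt_0_compat; [apply Rmult_lt_0_compat|]; auto. }
  assert (Hg2 : 0 < g^2) by nra.
  assert (H1 : 3 * g^2 <= a^2 + 2*b*c).
  { replace (2*b*c) with (2*(b*c)) by ring. apply amgm; [lra|apply pow2_ge_0|nra|]. replace ((g^2)^3) with ((g^3)^2) by ring. rewrite Hg3. ring. }
  assert (H2 : 3 * g^2 <= 2*a*b + c^2).
  { replace (2*a*b + c^2) with (c^2 + 2*(a*b)) by ring. apply amgm; [lra|apply pow2_ge_0|nra|]. replace ((g^2)^3) with ((g^3)^2) by ring. rewrite Hg3. ring. }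
  assert (H3 : 3 * g^2 <= 2*a*c + b^2).
  { replace (2*a*c + b^2) with (b^2 + 2*(a*c)) by ring. apply amgm; [lra|apply pow2_ge_0|nra|]. replace ((g^2)^3) with ((g^3)^2) by ring. rewrite Hg3. ring. }
  assert (Hs : 3 * g <= a + b + c).
  { apply cube_ge; try lra.
    assert (0 <= (a+b+c)^3 - 27*(a*b*c)); [|nra].
    assert (0 <= (a+b+c)*((a-b)^2+(b-c)^2+(c-a)^2)) by (apply Rmult_le_pos; [lra| pose proof (pow2_ge_0 (a-b)); pose proof (pow2_ge_0 (b-c)); pose proof (pow2_ge_0 (c-a)); lra]).
    assert (0 <= a*(b-c)^2 + b*(c-a)^2 + c*(a-b)^2) by (repeat apply Rplus_le_le_0_compat; apply Rmult_le_pos; try lra; apply pow2_ge_0).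
    assert ((a+b+c)^3 - 27*(a*b*c) = /2 * ((a+b+c)*((a-b)^2+(b-c)^2+(c-a)^2)) + 3*(a*(b-c)^2 + b*(c-a)^2 + c*(a-b)^2)) by field.
    lra. }
  set (x := sqrt (a ^ 2 + 2 * b * c)).
  set (y := sqrt (2 * a * b + c ^ 2)).
  set (z := sqrt (2 * a * c + b ^ 2)).
  assert (Hx : x^2 = a ^ 2 + 2 * b * c) by (unfold x; rewrite <- Rsqr_pow2; apply Rsqr_sqrt; nra).
  assert (Hy : y^2 = 2 * a * b + c ^ 2) by (unfold y; rewrite <- Rsqr_pow2; apply Rsqr_sqrt; nra).
  assert (Hz : z^2 = 2 * a * c + b ^ 2) by (unfold z; rewrite <- Rsqr_pow2; apply Rsqr_sqrt; nra).
  assert (Px : 0 <= x) by apply sqrt_pos.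
  assert (Py : 0 <= y) by apply sqrt_pos.
  assert (Pz : 0 <= z) by apply sqrt_pos.
  assert (Exy : 3*g^2 <= x*y) by (apply prod_ge; lra).
  assert (Eyz : 3*g^2 <= y*z) by (apply prod_ge; lra).
  assert (Ezx : 3*g^2 <= z*x) by (apply prod_ge; lra).
  assert (Hx0 : 0 < x) by (destruct Px as [|E]; auto; rewrite <- E in Hx; nra).
  assert (HD : 0 < (x+y+z)^2) by nra.
  apply (Rmult_le_reg_r ((x+y+z)^2)); auto.
  unfold Rdiv. rewrite Rmult_assoc, Rinv_l, Rmult_1_r by lra.
  assert (E : (x+y+z)^2 = (a+b+c)^2 + 2*(x*y+y*z+z*x)) by nra.
  rewrite E.
  assert (27 * g^3 <= (a+b+c)*(x*y+y*z+z*x)).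
  { assert (9*g^2 <= x*y+y*z+z*x) by lra.
    replace (27*g^3) with ((3*g)*(9*g^2)) by ring.
    apply Rmult_le_compat; lra. }
  nra.
Qed.
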